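(* For any one of the relaying schemes described in the context (decode-and-forward, compress-and-forward, amplify-and-forward, compute-and-forward, or hybrid), using the concavified rate regions, the maximum epoch sum-rate $$R_s(p_1,p_2,p_3)=\max\{R_1+R_2 : (R_1,R_2)\in\mathcal{R}_{HD}(p_1,p_2,p_3,\Delta),\ 0\le\Delta\le1\}$$ for half-duplex nodes, respectively $R_s(p_1,p_2,p_3)=\max\{R_1+R_2:(R_1,R_2)\in\mathcal{R}_{FD}(p_1,p_2,p_3)\}$ for full-duplex nodes, is jointly concave in the transmit powers $(p_1,p_2,p_3)\in[0,\infty)^3$.
   Context: Nodes $T_1,T_2$ exchange messages through relay $T_3$ (no direct link), with channel power gains $h_{13}>0$, $h_{23}>0$ and unit-variance noise at every node. $C(x)=\tfrac12\log(1+x)$, $\log^+(x)=\max\{\log x,0\}$, $\bar\Delta=1-\Delta$ for $\Delta\in[0,1]$, with the convention $\Delta C(x/\Delta)=0$ when $\Delta=0$. Base rate regions (powers $p_1,p_2,p_3\ge0$): - Decode-and-forward, half duplex: $R_1\le\min\{\Delta C(h_{13}p_1/\Delta),\bar\Delta C(h_{23}p_3/\bar\Delta)\}$, $R_2\le\min\{\Delta C(h_{23}p_2/\Delta),\bar\Delta C(h_{13}p_3/\bar\Delta)\}$, $R_1+R_2\le \Delta C((h_{13}p_1+h_{23}p_2)/\Delta)$; full duplex: the same with $\Delta,\bar\Delta$ replaced by $1$. - Compress-and-forward, half duplex: with $P_y=(h_{13}p_1+h_{23}p_2)/\Delta+1$, $R_1\le \Delta C\big(\frac{\sigma^2 h_{13}p_1/\Delta}{P_{\hat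 y}P_y^2-\sigma^2(P_y-1)}\big)$, $R_2\le \Delta C\big(\frac{\sigma^2 h_{23}p_2/\Delta}{P_{\hat y}P_y^2-\sigma^2(P_y-1)}\big)$ for some $P_{\hat y}\ge0,\sigma\ge0$; full duplex: $R_1\le C(h_{13}p_1/(1+\sigma_c^2))$, $R_2\le C(h_{23}p_2/(1+\sigma_c^2))$ with $\sigma_c^2=\max\{(1+h_{23}p_2)2^{-2R_3},(1+h_{13}p_1)2^{-2R_3}\}$, $R_3=\min\{C(h_{13}p_3),C(h_{23}p_3)\}$. - Amplify-and-forward: $R_1\le \Delta C\big(\frac{h_{13}h_{23}p_1p_3}{\Delta(h_{13}p_1+h_{23}(p_2+p_3)+\Delta)}\big)$, $R_2\le \Delta C\big(\frac{h_{13}h_{23}p_2p_3}{\Delta(h_{23}p_2+h_{13}(p_1+p_3)+\Delta)}\big)$ with $\Delta=1/2$ (half duplex) or $\Delta=1$ (full duplex). - Compute-and-forward, half duplex: $R_1\le\min\{\tfrac{\Delta}{2}\log^+(\tfrac{p_1}{p_1+p_2}+\tfrac{h_{13}p_1}{\Delta}),\bar\Delta C(h_{23}p_3/\bar\Delta)\}$, $R_2\le\min\{\tfrac{\Delta}{2}\log^+(\tfrac{p_2}{p_1+p_2}+\tfrac{h_{23}p_2}{\Delta}),\bar\Delta C(h_{13}p_3/\bar\Delta)\}$; full duplex: same with $\Delta=\bar\Delta=1$. - Hybrid: the union of the four base regions for the same powers. Concavification: the region $\mathcal{R}_{FD}(p_1,p_2,p_3)$ of a scheme is the set of all $(R_1,R_2)=\sum_i\lambda_i(R_{1,i},R_{2,i})$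 with finitely many $\lambda_i\ge0$, $\sum_i\lambda_i=1$, $(R_{1,i},R_{2,i})$ in the (full-duplex) base region at powers $(p_{1,i},p_{2,i},p_{3,i})$ and $\sum_i\lambda_ip_{j,i}\le p_j$ ($j=1,2,3$); $\mathcal{R}_{HD}(p_1,p_2,p_3,\Delta)$ is defined likewise from the half-duplex base regions with time sharing also over $\Delta$ (components with parameters $\Delta_i$ and $\sum_i\lambda_i\Delta_i=\Delta$). *)

(* Defs.v *)
From Stdlib Require Import Reals Lra List.
From Coquelicot Require Import Coquelicot.
Open Scope R_scope.

Definition log2 (x : R) : R := ln x / ln 2.
Definition Cap (x : R) : R := / 2 * log2 (1 + x).
Definition logp (x : R) : R := Rmax (log2 x) 0.
Definition scal0 (D y : R) : R := if Req_EM_T D 0 then 0 else D * y.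
Definition dC (D x : R) : R := scal0 D (Cap (x / D)).

Inductive scheme := DF | CF | AF | CmpF | Hybrid.
Inductive duplex := HD | FD.

Definition DF_HD h13 h23 p1 p2 p3 D r1 r2 : Prop :=
  r1 <= dC D (h13 * p1) /\ r1 <= dC (1 - D) (h23 * p3) /\
  r2 <= dC D (h23 * p2) /\ r2 <= dC (1 - D) (h13 * p3) /\
  r1 + r2 <= dC D (h13 * p1 + h23 * p2).

Definition CF_HD h13 h23 p1 p2 (p3 : R) D r1 r2 : Prop :=
  exists Pyh sig, 0 <= Pyh /\ 0 <= sig /\
    let Py := (h13 * p1 + h23 * p2) / D + 1 in
    let Den := Pyh * Py ^ 2 - sig ^ 2 * (Py - 1) in
    r1 <= scal0 D (Cap (sig ^ 2 * (h13 * p1 / D) / Den)) /\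
    r2 <= scal0 D (Cap (sig ^ 2 * (h23 * p2 / D) / Den)).

(* amplify-and-forward with a fixed time fraction d (d = 1/2 HD, d = 1 FD) *)
Definition AF_d (d : R) h13 h23 p1 p2 p3 r1 r2 : Prop :=
  r1 <= d * Cap (h13 * h23 * p1 * p3 / (d * (h13 * p1 + h23 * (p2 + p3) + d))) /\
  r2 <= d * Cap (h13 * h23 * p2 * p3 / (d * (h23 * p2 + h13 * (p1 + p3) + d))).

Definition CmpF_HD h13 h23 p1 p2 p3 D r1 r2 : Prop :=
  r1 <= scal0 D (/ 2 * logp (p1 / (p1 + p2) + h13 * p1 / D)) /\
  r1 <= dC (1 - D) (h23 * p3) /\
  r2 <= scal0 D (/ 2 * logp (p2 / (p1 + p2) + h23 * p2 / D)) /\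
  r2 <= dC (1 - D) (h13 * p3).

Definition DF_FD h13 h23 p1 p2 p3 r1 r2 : Prop :=
  r1 <= Cap (h13 * p1) /\ r1 <= Cap (h23 * p3) /\
  r2 <= Cap (h23 * p2) /\ r2 <= Cap (h13 * p3) /\
  r1 + r2 <= Cap (h13 * p1 + h23 * p2).

Definition CF_FD h13 h23 p1 p2 p3 r1 r2 : Prop :=
  let R3 := Rmin (Cap (h13 * p3)) (Cap (h23 * p3)) in
  let sc := Rmax ((1 + h23 * p2) * Rpower 2 (- 2 * R3))
                 ((1 + h13 * p1) * Rpower 2 (- 2 * R3)) in
  r1 <= Cap (h13 * p1 / (1 + sc)) /\ r2 <= Cap (h23 * p2 / (1 + sc)).

Definition CmpF_FD h13 h23 p1 p2 p3 r1 r2 : Prop :=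
  r1 <= / 2 * logp (p1 / (p1 + p2) + h13 * p1) /\ r1 <= Cap (h23 * p3) /\
  r2 <= / 2 * logp (p2 / (p1 + p2) + h23 * p2) /\ r2 <= Cap (h13 * p3).

(* base region of a scheme; D is ignored in full duplex, and for AF in half
   duplex the time fraction is fixed to 1/2 *)
Definition base (m : duplex) (s : scheme) (h13 h23 p1 p2 p3 D r1 r2 : R) : Prop :=
  0 <= r1 /\ 0 <= r2 /\
  match m with
  | HD =>
    match s with
    | DF => DF_HD h13 h23 p1 p2 p3 D r1 r2
    | CF => CF_HD h13 h23 p1 p2 p3 D r1 r2
    | AF => AF_d (/ 2) h13 h23 p1 p2 p3 r1 r2
    | CmpF => CmpF_HD h13 h23 p1 p2 p3 D r1 r2
    | Hybrid => DF_HD h13 h23 p1 p2 p3 D r1 r2 \/ CF_HD h13 h23 p1 p2 p3 D r1 r2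
                \/ AF_d (/ 2) h13 h23 p1 p2 p3 r1 r2 \/ CmpF_HD h13 h23 p1 p2 p3 D r1 r2
    end
  | FD =>
    match s with
    | DF => DF_FD h13 h23 p1 p2 p3 r1 r2
    | CF => CF_FD h13 h23 p1 p2 p3 r1 r2
    | AF => AF_d 1 h13 h23 p1 p2 p3 r1 r2
    | CmpF => CmpF_FD h13 h23 p1 p2 p3 r1 r2
    | Hybrid => DF_FD h13 h23 p1 p2 p3 r1 r2 \/ CF_FD h13 h23 p1 p2 p3 r1 r2
                \/ AF_d 1 h13 h23 p1 p2 p3 r1 r2 \/ CmpF_FD h13 h23 p1 p2 p3 r1 r2
    end
  end.

(* a time-sharing component: weight, rates, powers, time-share parameter *)
Record tscomp := mkComp { lam : R; cr1 : R; cr2 : R;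
                        cp1 : R; cp2 : R; cp3 : R; cD : R }.

Definition wsum (f : tscomp -> R) (l : list tscomp) : R :=
  fold_right (fun c acc => lam c * f c + acc) 0 l.

Definition conc_region (m : duplex) (s : scheme) (h13 h23 p1 p2 p3 D r1 r2 : R) : Prop :=
  exists l : list tscomp,
    List.Forall (fun c => 0 <= lam c /\ 0 <= cp1 c /\ 0 <= cp2 c /\ 0 <= cp3 c /\
                     (m = HD -> 0 <= cD c <= 1) /\
                     base m s h13 h23 (cp1 c) (cp2 c) (cp3 c) (cD c) (cr1 c) (cr2 c)) l /\
    wsum (fun _ => 1) l = 1 /\
    wsum cp1 l <= p1 /\ wsum cp2 l <= p2 /\ wsum cp3 l <= p3 /\
    (m = HD -> wsum cD l = D) /\
    r1 = wsum cr1 l /\ r2 = wsum cr2 l.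

Definition sum_rate (m : duplex) (s : scheme) (h13 h23 p1 p2 p3 : R) : Rbar :=
  Lub_Rbar (fun x => exists D r1 r2,
    (m = HD -> 0 <= D <= 1) /\
    conc_region m s h13 h23 p1 p2 p3 D r1 r2 /\ x = r1 + r2).

(* Main.v *)
Require Import Defs.
From Stdlib Require Import Reals Lra List.
From Coquelicot Require Import Coquelicot.
Open Scope R_scope.

Lemma lub_fin_le (E : R -> Prop) (c x0 : R) :
  E x0 -> (forall x, E x -> x <= c) ->
  exists a, Lub_Rbar E = Finite a /\ a <= c /\ x0 <= a.
Proof.
  intros H0 Hub. destruct (Lub_Rbar_correct E) as [u l].
  assert (Hl : Rbar_le (Lub_Rbar E) c) by (apply l; intros x Hx; simpl; auto).
  assert (Hx0 := u x0 H0).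
  destruct (Lub_Rbar E) as [a| |]; simpl in *; try tauto.
  exists a; auto.
Qed.

Lemma abs_conc (A B C : R -> Prop) (t : R) : 0 <= t <= 1 ->
  (exists x, A x) -> (exists y, B y) ->
  (forall x y, A x -> B y -> C (t*x+(1-t)*y)) ->
  Rbar_le (Rbar_plus (Rbar_mult t (Lub_Rbar A)) (Rbar_mult (1-t) (Lub_Rbar B))) (Lub_Rbar C).
Proof.
  intros Ht [x0 Hx0] [y0 Hy0] Hc.
  destruct (Lub_Rbar_correct C) as [ubC lubC].
  destruct (Lub_Rbar C) as [c| |] eqn:Ec.
  2: destruct (Rbar_plus _ _); simpl; auto.
  2: { specialize (ubC _ (Hc _ _ Hx0 Hy0)). simpl in ubC. tauto. }
  assert (Hle : forall x y, A x -> B y -> t*x+(1-t)*y <= c).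
  { intros x y Hx Hy. exact (ubC _ (Hc _ _ Hx Hy)). }
  destruct (Req_dec t 0) as [T0|T0].
  { subst t.
    destruct (lub_fin_le B c y0 Hy0) as [b [Eb [Hb1 Hb2]]].
    { intros y Hy. specialize (Hle _ _ Hx0 Hy). lra. }
    rewrite Eb, Rbar_mult_0_l. simpl. lra. }
  destruct (Req_dec t 1) as [T1|T1].
  { subst t.
    destruct (lub_fin_le A c x0 Hx0) as [a [Ea [Ha1 Ha2]]].
    { intros x Hx. specialize (Hle _ _ Hx Hy0). lra. }
    replace (1-1) with 0 by ring.
    rewrite Ea, Rbar_mult_0_l. simpl. lra. }
  assert (Tp : 0 < t) by lra. assert (Tq : 0 < 1 - t) by lra.
  destruct (lub_fin_le A ((c - (1-t)*y0)/t) x0 Hx0) as [a [Ea [Ha1 Ha2]]].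
  { intros x Hx. specialize (Hle _ _ Hx Hy0).
    apply Rmult_le_reg_l with t; auto. field_simplify; lra. }
  destruct (lub_fin_le B ((c - t*x0)/(1-t)) y0 Hy0) as [b [Eb [Hb1 Hb2]]].
  { intros y Hy. specialize (Hle _ _ Hx0 Hy).
    apply Rmult_le_reg_l with (1-t); auto. field_simplify; lra. }
  rewrite Ea, Eb. simpl.
  assert (HB : forall y, B y -> y <= (c - t*a)/(1-t)).
  { intros y Hy.
    destruct (lub_fin_le A ((c - (1-t)*y)/t) x0 Hx0) as [a' [Ea' [Ha1' _]]].
    { intros x Hx. specialize (Hle _ _ Hx Hy).
      apply Rmult_le_reg_l with t; auto. field_simplify; lra. }
    rewrite Ea in Ea'. injection Ea' as <-.
    apply Rmult_le_compat_l with (r := t) in Ha1'; [|lra].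
    replace (t * ((c - (1-t)*y)/t)) with (c - (1-t)*y) in Ha1' by (field; lra).
    apply Rmult_le_reg_l with (1-t); auto.
    replace ((1-t) * ((c - t*a)/(1-t))) with (c - t*a) by (field; lra). lra. }
  destruct (lub_fin_le B ((c - t*a)/(1-t)) y0 Hy0 HB) as [b' [Eb' [Hb1' _]]].
  rewrite Eb in Eb'. injection Eb' as <-.
  apply Rmult_le_compat_l with (r := 1-t) in Hb1'; [|lra].
  replace ((1-t) * ((c - t*a)/(1-t))) with (c - t*a) in Hb1' by (field; lra).
  lra.
Qed.

Lemma Cap_ge0 x : 0 <= x -> 0 <= Cap x.
Proof.
  intros H. unfold Cap, log2.
  assert (0 < ln 2) by (rewrite <- ln_1; apply ln_increasing; lra).
  assert (0 <= ln (1 + x)).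
  { destruct (Req_dec x 0). subst. rewrite Rplus_0_r, ln_1; lra.
    left. rewrite <- ln_1. apply ln_increasing; lra. }
  apply Rmult_le_pos; [lra|]. unfold Rdiv. apply Rmult_le_pos; auto.
  left; apply Rinv_0_lt_compat; auto.
Qed.

Lemma scal0_ge0 D y : 0 <= D -> 0 <= y -> 0 <= scal0 D y.
Proof. intros; unfold scal0; destruct Req_EM_T; try lra. apply Rmult_le_pos; auto. Qed.

Lemma dC_ge0 D x : 0 <= D -> 0 <= x -> 0 <= dC D x.
Proof.
  intros. unfold dC. apply scal0_ge0; auto. apply Cap_ge0.
  destruct (Req_dec D 0). subst. unfold Rdiv. rewrite Rinv_0, Rmult_0_r; lra.
  unfold Rdiv. apply Rmult_le_pos; auto. left; apply Rinv_0_lt_compat; lra.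
Qed.

Lemma base0 m s h13 h23 : 0 < h13 -> 0 < h23 -> base m s h13 h23 0 0 0 0 0 0.
Proof.
  intros. unfold base. split; [lra|split; [lra|]].
  assert (Z : forall h, 0 < h -> 0 <= h * 0) by (intros; lra).
  assert (L : forall x, 0 <= / 2 * logp x).
  { intros; unfold logp. apply Rmult_le_pos; [lra| apply Rmax_r]. }
  assert (A : forall d, 0 <= d -> AF_d d h13 h23 0 0 0 0 0).
  { intros d Hd; unfold AF_d. rewrite !Rmult_0_r.
    unfold Rdiv; rewrite !Rmult_0_l. split; apply Rmult_le_pos; auto; apply Cap_ge0; lra. }
  assert (DH : DF_HD h13 h23 0 0 0 0 0 0).
  { unfold DF_HD; repeat split; try rewrite Rplus_0_r; apply dC_ge0; lra. }
  assert (DFF : DF_FD h13 h23 0 0 0 0 0).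
  { unfold DF_FD; repeat split; try rewrite Rplus_0_r; apply Cap_ge0; lra. }
  assert (CFF : CF_FD h13 h23 0 0 0 0 0).
  { unfold CF_FD; simpl. unfold Rdiv; rewrite !Rmult_0_r, !Rmult_0_l.
    split; apply Cap_ge0; lra. }
  assert (CH : CF_HD h13 h23 0 0 0 0 0 0).
  { unfold CF_HD. exists 0, 0. simpl. unfold scal0; destruct Req_EM_T; try lra. }
  assert (MH : CmpF_HD h13 h23 0 0 0 0 0 0).
  { assert (S0 : forall y, scal0 0 y = 0) by (intros; unfold scal0; destruct Req_EM_T; lra).
    unfold CmpF_HD. rewrite !S0. repeat split; try lra; apply dC_ge0; lra. }
  assert (MF : CmpF_FD h13 h23 0 0 0 0 0).
  { unfold CmpF_FD. repeat split; auto; apply Cap_ge0; lra. }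
  destruct m, s; auto; try (apply A; lra); left; exact DH || exact DFF.
Qed.

Definition scale (s : R) (c : tscomp) : tscomp :=
  mkComp (s * lam c) (cr1 c) (cr2 c) (cp1 c) (cp2 c) (cp3 c) (cD c).

Lemma wsum_app f l1 l2 : wsum f (l1 ++ l2) = wsum f l1 + wsum f l2.
Proof. induction l1; simpl; [ring| rewrite IHl1; ring]. Qed.

Lemma wsum_scale f s l : (forall c, f (scale s c) = f c) ->
  wsum f (map (scale s) l) = s * wsum f l.
Proof. intros Hf; induction l; simpl; [ring| rewrite IHl, Hf; simpl; ring]. Qed.

Ltac ws := rewrite wsum_app, !wsum_scale by reflexivity.

Lemma comb t a b c d : 0 <= t <= 1 -> a <= b -> c <= d -> t*a+(1-t)*c <= t*b+(1-t)*d.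
Proof.
  intros Ht H1 H2. apply Rplus_le_compat; apply Rmult_le_compat_l; lra.
Qed.

Theorem lemma2 (m : duplex) (s : scheme) (h13 h23 : R) :
  0 < h13 -> 0 < h23 ->
  forall (p1 p2 p3 q1 q2 q3 t : R),
    0 <= p1 -> 0 <= p2 -> 0 <= p3 -> 0 <= q1 -> 0 <= q2 -> 0 <= q3 ->
    0 <= t <= 1 ->
    Rbar_le
      (Rbar_plus (Rbar_mult t (sum_rate m s h13 h23 p1 p2 p3))
                 (Rbar_mult (1 - t) (sum_rate m s h13 h23 q1 q2 q3)))
      (sum_rate m s h13 h23 (t * p1 + (1 - t) * q1) (t * p2 + (1 - t) * q2)
                            (t * p3 + (1 - t) * q3)).
Proof.
  intros H13 H23 p1 p2 p3 q1 q2 q3 t P1 P2 P3 Q1 Q2 Q3 Ht.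
  unfold sum_rate. apply abs_conc; auto.
  1,2: exists 0, 0, 0, 0; split; [intros; lra|]; split; [|ring];
    exists (mkComp 1 0 0 0 0 0 0 :: nil); split;
    [ constructor; [|constructor]; simpl;
      split; [lra|split;[lra|split;[lra|split;[lra|split;[intros;lra|apply base0;auto]]]]]
    | unfold wsum; simpl; repeat split; try lra; intros; lra ].
  intros x y [D1 [a1 [b1 [HD1 [[l1 H1] ->]]]]] [D2 [a2 [b2 [HD2 [[l2 H2] ->]]]]].
  exists (t*D1+(1-t)*D2), (t*a1+(1-t)*a2), (t*b1+(1-t)*b2).
  split.
  { intros E; specialize (HD1 E); specialize (HD2 E).
    split. apply Rle_trans with (t*0+(1-t)*0); [lra| apply comb; lra].
    apply Rle_trans with (t*1+(1-t)*1); [apply comb; lra| lra]. }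
  split; [|ring].
  destruct H1 as [F1 [W1 [X1 [Y1 [Z1 [D1e [-> ->]]]]]]].
  destruct H2 as [F2 [W2 [X2 [Y2 [Z2 [D2e [-> ->]]]]]]].
  exists (map (scale t) l1 ++ map (scale (1-t)) l2).
  split.
  { apply Forall_app; split; apply Forall_map;
      [eapply Forall_impl; [|exact F1] | eapply Forall_impl; [|exact F2]];
      intros c [L0 Hc]; (split; [simpl; apply Rmult_le_pos; lra | exact Hc]). }
  split; [ws; rewrite W1, W2; ring|].
  split; [ws; apply comb; auto|].
  split; [ws; apply comb; auto|].
  split; [ws; apply comb; auto|].
  split; [intros E; ws; rewrite (D1e E), (D2e E); ring|].
  split; ws; ring.
Qed.
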